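(* Let $f:\mathbb{R}^n\to\mathbb{R}$ be differentiable with $L$-Lipschitz gradient $\nabla f$, i.e. $\|\nabla f(x)-\nabla f(y)\|_2\le L\|x-y\|_2$ for all $x,y$. Suppose the estimators $G^t$ are independent versions of an unbiased estimator $G$ of $\nabla f$, and let $x^t$ be the iterates of stochastic Markov gradient descent (SMGD) with lattice resolution $\alpha>0$ and normalizer $\eta>0$. Let $\mathcal{E}^t$ denote the event that $\|G^t(x^t)\|_\infty\le\eta$. Then $$\mathbb{E}\left[f(x^{t+1})\,\middle|\,x^t,\mathcal{E}^t\right]\le f(x^t)+\frac{L\alpha^2}{2\eta}\,\mathbb{E}\left[\|G(x^t)\|_1\,\middle|\,x^t,\mathcal{E}^t\right]-\frac{\alpha}{\eta}\|\nabla f(x^t)\|_2^2 .$$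
   Context: SMGD: Let $f:\mathbb{R}^n\to\mathbb{R}$ be differentiable, $\alpha>0$, $\eta>0$, and $x^0\in\alpha\mathbb{Z}^n$. At step $t$ a random vector $G^t(x^t)\in\mathbb{R}^n$ (an estimate of $\nabla f(x^t)$) is drawn; then for each coordinate $i\in\{1,\dots,n\}$, conditionally on $G^t$ and $x^t$, $\Delta^t_i\in\{0,1\}$ is a Bernoulli random variable with $\mathbb{P}[\Delta^t_i=1\mid G^t,x^t]=\min(|G^t(x^t)_i|/\eta,1)$, and one sets $x^{t+1}_i=x^t_i-\alpha\,\mathrm{sgn}(G^t(x^t)_i)\,\Delta^t_i$. A random function $G:\mathbb{R}^n\to\mathbb{R}^n$ is an unbiased estimator of $\nabla f$ if $\mathbb{E}[G(x)]=\nabla f(x)$ for every $x$. Standing assumptions: $\{G^t\}$ are independent identically distributed copies of $G$; each $G^t$ is independent of $x^t$, so $\mathbb{E}[G^t(x^t)\mid x^t]=\nabla f(x^t)$; and moreover $\mathbb{E}[G^t(x^t)\mid x^t,\mathcal{E}^t]=\nabla f(x^t)$, where $\mathcal{E}^t$ is the event $\|G^t(x^t)\|_\infty\le\eta$. Subscript $i$ denotes the $i$-th coordinate. *)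

(* Defs.v *)
From HB Require Import structures.
From mathcomp Require Import all_boot all_order all_algebra.
From mathcomp Require Import all_classical all_reals all_analysis.
Set Implicit Arguments. Unset Strict Implicit. Unset Printing Implicit Defensive.
Import Order.TTheory GRing.Theory Num.Theory.
Import numFieldNormedType.Exports.
Local Open Scope classical_set_scope.
Local Open Scope ring_scope.

Section SMGDDefs.
Variable R : realType.
Variable n : nat.

Definition basis_vec (i : 'I_n) : 'rV[R]_n := delta_mx 0 i.

Definition grad (f : 'rV[R]_n -> R) (x : 'rV[R]_n) : 'rV[R]_n :=
  \row_i ('D_(basis_vec i) f x).

Definition norm2sq (v : 'rV[R]_n) : R := \sum_i (v 0 i) ^+ 2.
Definition norm2 (v : 'rV[R]_n) : R := Num.sqrt (norm2sq v).
Definition norm1 (v : 'rV[R]_n) : R := \sum_i `|v 0 i|.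

Definition lipschitz_grad (f : 'rV[R]_n -> R) (L : R) : Prop :=
  forall x y, norm2 (grad f x - grad f y) <= L * norm2 (x - y).

Definition in_lattice (alpha : R) (x : 'rV[R]_n) : Prop :=
  forall i, exists k : int, x 0 i = alpha * k%:~R.

Variables (d : measure_display) (T : measurableType d).

Definition rvec_measurable (X : T -> 'rV[R]_n) : Prop :=
  forall i, measurable_fun setT (fun w => X w 0 i).

Definition gen2 (X Y : T -> 'rV[R]_n) : set (set T) :=
  [set A | exists i : 'I_n, exists B : set R, measurable B /\
     (A = (fun w => X w 0 i) @^-1` B \/ A = (fun w => Y w 0 i) @^-1` B)].

Definition sigma2 (X Y : T -> 'rV[R]_n) : set (set T) := <<s gen2 X Y >>.

Definition condE (P : probability T R) (A : set T) (Z : T -> R) : R :=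
  Rintegral P A Z / fine (P A).

(* one SMGD step: x^{t+1}_i = x^t_i - alpha sgn(G_i) Delta_i *)
Definition smgd_step (alpha : R) (x g : 'rV[R]_n) (D : 'I_n -> bool) : 'rV[R]_n :=
  \row_i (x 0 i - alpha * Num.sg (g 0 i) * (D i)%:R).

Definition Eevent (eta : R) (G : T -> 'rV[R]_n) : set T :=
  [set w | forall i, `|G w 0 i| <= eta].

End SMGDDefs.

(* Main.v *)
Require Import Defs.
From HB Require Import structures.
From mathcomp Require Import all_boot all_order all_algebra.
From mathcomp Require Import all_classical all_reals all_analysis.
From mathcomp Require Import ring lra.
From mathcomp Require Import measurable_realfun.
Import Order.TTheory GRing.Theory Num.Theory.
Import numFieldNormedType.Exports.
Local Open Scope classical_set_scope.
Local Open Scope ring_scope.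

Lemma cs_sq (R : realType) n (a b : 'I_n -> R) :
  (\sum_i a i * b i) ^+ 2 <= (\sum_i a i ^+ 2) * (\sum_i b i ^+ 2).
Proof.
have H : 0 <= \sum_i \sum_j (a i * b j - a j * b i) ^+ 2.
  by apply: sumr_ge0 => i _; apply: sumr_ge0 => j _; exact: sqr_ge0.
have E : \sum_i \sum_j (a i * b j - a j * b i) ^+ 2 =
   (\sum_i \sum_j (a i ^+ 2 * b j ^+ 2)) + (\sum_i \sum_j (b i ^+ 2 * a j ^+ 2))
   - 2 * \sum_i \sum_j ((a i * b i) * (a j * b j)).
  rewrite -big_split /= mulr_sumr -sumrB; apply: eq_bigr => i _.
  rewrite -big_split /= mulr_sumr -sumrB; apply: eq_bigr => j _.
  ring.
have E1 : forall (u v : 'I_n -> R), \sum_i \sum_j (u i * v j) = (\sum_i u i) * (\sum_j v j).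
  move=> u v; rewrite mulr_suml; apply: eq_bigr => i _; by rewrite mulr_sumr.
move: H; rewrite E !E1 expr2; set X := \sum_i _ * _. lra.
Qed.

Lemma cs (R : realType) n (a b : 'I_n -> R) :
  \sum_i a i * b i <= Num.sqrt (\sum_i a i ^+ 2) * Num.sqrt (\sum_i b i ^+ 2).
Proof.
have ha : 0 <= \sum_i a i ^+ 2 by apply: sumr_ge0 => i _; exact: sqr_ge0.
rewrite -sqrtrM //; apply: le_trans (ler_norm _) _.
by rewrite -sqrtr_sqr ler_sqrt ?cs_sq // mulr_ge0 // sumr_ge0 // => i _; exact: sqr_ge0.
Qed.

Lemma Dgrad (R : realType) n (f : 'rV[R]_n -> R) y h : differentiable f y ->
  'D_h f y = \sum_i h 0 i * grad f y 0 i.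
Proof.
move=> df; rewrite deriveE //.
rewrite {1}(row_sum_delta h) linear_sum; apply: eq_bigr => i _.
by rewrite linearZ /= /grad mxE deriveE.
Qed.
Lemma line_derive (R : realType) n (f : 'rV[R]_n -> R) x h t :
  differentiable f (x + t *: h) ->
  is_derive t 1 (fun s : R => f (x + s *: h)) ('D_h f (x + t *: h)).
Proof.
move=> df.
have E : (fun s : R => s^-1 *: (((fun s : R => f (x + s *: h)) \o shift t) (s *: 1)
            - f (x + t *: h))) =
         (fun s : R => s^-1 *: ((f \o shift (x + t *: h)) (s *: h) - f (x + t *: h))).
  apply/funext => s /=; congr (_ *: (f _ - _)).
  have -> : s%:A = s by rewrite /GRing.scale /= mulr1.
  by rewrite scalerDl addrCA.
have dv : derivable (fun s : R => f (x + s *: h)) t 1.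
  rewrite /derivable E; exact: (@diff_derivable _ _ _ f (x + t *: h) h df).
apply: DeriveDef => //.
by rewrite /derive E.
Qed.

Lemma norm2sq_ge0 (R : realType) n (v : 'rV[R]_n) : 0 <= norm2sq v.
Proof. by apply: sumr_ge0 => i _; exact: sqr_ge0. Qed.

Lemma descent (R : realType) n (f : 'rV[R]_n -> R) L :
  (forall x, differentiable f x) -> lipschitz_grad f L ->
  forall x h, f (x + h) <= f x + \sum_i grad f x 0 i * h 0 i + L / 2 * norm2sq h.
Proof.
move=> df lip x h.
set c := \sum_i grad f x 0 i * h 0 i; set q := norm2sq h; set k := L / 2 * q.
pose g := fun s : R => f (x + s *: h).
pose phi : R -> R := g - c \*: id - k \*: (id * id).
pose dphi := fun t : R => 'D_h f (x + t *: h) - c * 1 - k * (t * 1 + t * 1).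
have der (t : R) : is_derive t (1 : R) phi (dphi t).
  apply: is_deriveB; first apply: is_deriveB.
  - exact: line_derive.
have cphi : {within `[0, 1], continuous phi}.
  apply: continuous_subspaceT => t.
  apply: differentiable_continuous; apply/derivable1_diffP.
  by case: (der t).
have [t0 t0in E] := MVT_segment ler01 (fun t _ => der t) cphi.
have t0ge0 : 0 <= t0 by move: t0in; rewrite in_itv /= => /andP[].
have dle : dphi t0 <= 0.
  rewrite /dphi Dgrad // !mulr1.
  have -> : \sum_i h 0 i * grad f (x + t0 *: h) 0 i - c =
     \sum_i (grad f (x + t0 *: h) - grad f x) 0 i * h 0 i.
    rewrite /c -sumrB; apply: eq_bigr => i _; rewrite !mxE; ring.
  have := cs _ _ (fun i => (grad f (x + t0 *: h) - grad f x) 0 i) (fun i => h 0 i).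
  rewrite -/(norm2sq _) -/(norm2sq _) -/(norm2 _) -/(norm2 h) => H1.
  have e0 : x + t0 *: h - x = t0 *: h by rewrite addrC addKr.
  have := lip (x + t0 *: h) x; rewrite e0 => H2.
  have N : norm2 (t0 *: h) = t0 * norm2 h.
    rewrite /norm2 /norm2sq.
    have -> : \sum_i (t0 *: h) 0 i ^+ 2 = t0 ^+ 2 * \sum_i h 0 i ^+ 2.
      by rewrite mulr_sumr; apply: eq_bigr => i _; rewrite mxE exprMn.
    by rewrite sqrtrM ?sqr_ge0 // sqrtr_sqr ger0_norm.
  have hq : norm2 h ^+ 2 = q by rewrite /norm2 sqr_sqrtr // norm2sq_ge0.
  have nh0 : 0 <= norm2 h by exact: sqrtr_ge0.
  have H3 : norm2 (grad f (x + t0 *: h) - grad f x) * norm2 h <= L * (t0 * norm2 h) * norm2 h.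
    by rewrite -N; apply: ler_wpM2r.
  have : \sum_i (grad f (x + t0 *: h) - grad f x) 0 i * h 0 i <= L * t0 * q.
    by rewrite -hq; apply: (le_trans H1); apply: (le_trans H3); rewrite expr2; lra.
  rewrite /k; lra.
have P1 : phi 1 = f (x + h) - c - k.
  change (f (x + 1 *: h) - c * 1 - k * (1 * 1) = f (x + h) - c - k).
  by rewrite scale1r !mulr1.
have P0 : phi 0 = f x.
  change (f (x + 0 *: h) - c * 0 - k * (0 * 0) = f x).
  by rewrite scale0r addr0 !mulr0 !subr0.
move: E; rewrite P1 P0 subr0 mulr1 => E.
have := dle; rewrite -E; lra.
Qed.

Lemma integ_bd (R : realType) (d : measure_display) (T : measurableType d)
  (P : probability T R) (A : set T) (h : T -> R) (M : R) :
  measurable A -> measurable_fun A h -> (forall w, A w -> `|h w| <= M) ->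
  P.-integrable A (EFin \o h).
Proof.
move=> mA mh hM; apply: measurable_bounded_integrable => //.
  by apply: (le_lt_trans (probability_le1 P mA)); exact: ltey.
exists M; split; first exact: num_real.
by move=> N MN w Aw /=; apply: le_trans (hM w Aw) (ltW MN).
Qed.

Lemma Rintegral_sum (R : realType) (d : measure_display) (T : measurableType d)
  (P : probability T R) (A : set T) (I : Type) (r : seq I) (h : I -> T -> R) :
  measurable A -> (forall i, P.-integrable A (EFin \o h i)) ->
  Rintegral P A (fun w => \sum_(i <- r) h i w) = \sum_(i <- r) Rintegral P A (h i).
Proof.
move=> mA hi; elim: r => [|j r IH].
  under eq_Rintegral do rewrite big_nil.
  by rewrite big_nil Rintegral_cst // mul0r.
under eq_Rintegral do rewrite big_cons.
rewrite big_cons RintegralD // ?IH //.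
have -> : (EFin \o (fun w => \sum_(i <- r) h i w)) = (fun w => \sum_(i <- r) (EFin \o h i) w)%E.
  by apply/funext => w /=; rewrite sumEFin.
exact: integrable_sum.
Qed.

Lemma indic_bool (R : realType) (T : Type) (b : T -> bool) w :
  \1_[set w | b w] w = (b w)%:R :> R.
Proof.
rewrite indicE; have [bw|nbw] := boolP (b w).
  by rewrite mem_set.
by rewrite memNset //= => bw; rewrite bw in nbw.
Qed.

Lemma keyK (R : realType) (n : nat) (d : measure_display) (T : measurableType d)
  (P : probability T R) (Dl : T -> bool) (m : T -> R) (S : set T) :
  measurable S -> measurable [set w | Dl w] ->
  P (S `&` [set w | Dl w]) = (\int[P]_(w in S) (m w)%:E)%E ->
  Rintegral P S (fun w => (Dl w)%:R) = Rintegral P S m.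
Proof.
move=> mS mDl hS; rewrite /Rintegral.
under eq_integral do rewrite -indic_bool.
rewrite integral_indic // setIC; congr fine; exact: hS.
Qed.

Lemma intZ (R : realType) (d : measure_display) (T : measurableType d)
  (P : probability T R) (A : set T) (h : T -> R) (k : R) :
  measurable A ->
  P.-integrable A (EFin \o h) -> P.-integrable A (EFin \o (fun w => k * h w)).
Proof.
move=> mA ih; have := integrableZl mA k ih.
by apply: eq_integrable => // w _ /=; rewrite EFinM.
Qed.

Lemma intD (R : realType) (d : measure_display) (T : measurableType d)
  (P : probability T R) (A : set T) (h1 h2 : T -> R) :
  measurable A ->
  P.-integrable A (EFin \o h1) -> P.-integrable A (EFin \o h2) ->
  P.-integrable A (EFin \o (fun w => h1 w + h2 w)).
Proof.
move=> mA i1 i2; have := integrableD mA i1 i2.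
by apply: eq_integrable => // w _ /=; rewrite EFinD.
Qed.

Lemma intsum (R : realType) (d : measure_display) (T : measurableType d)
  (P : probability T R) (A : set T) (I : Type) (r : seq I) (h : I -> T -> R) :
  measurable A -> (forall i, P.-integrable A (EFin \o h i)) ->
  P.-integrable A (EFin \o (fun w => \sum_(i <- r) h i w)).
Proof.
move=> mA hi.
have -> : (EFin \o (fun w => \sum_(i <- r) h i w)) = (fun w => \sum_(i <- r) (EFin \o h i) w)%E.
  by apply/funext => w /=; rewrite sumEFin.
exact: integrable_sum.
Qed.

Lemma sgE (R : realType) (r : R) : Num.sg r = (0 < r)%R%:R - (r < 0)%R%:R.
Proof. by case: sgrP; rewrite /= ?subr0 ?sub0r. Qed.

Definition v3 (R : realType) (k : 'I_3) : R := (k : nat)%:R - 1.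

Lemma v3_inj (R : realType) : injective (@v3 R).
Proof.
move=> a b; rewrite /v3 => /addIr /eqP; rewrite eqr_nat => /eqP ab.
exact: val_inj.
Qed.

Lemma fin_decomp (R : realType) n (F : 'rV[R]_n -> R) (s : 'I_n -> R) :
  (forall i, s i = -1 \/ s i = 0 \/ s i = 1) ->
  F (\row_i s i) = \sum_(σ : {ffun 'I_n -> 'I_3})
     (\prod_i (s i == v3 R (σ i))%:R) * F (\row_i v3 R (σ i)).
Proof.
move=> hs.
pose code (r : R) : 'I_3 := inord (if r == -1 then 0%N else if r == 0 then 1%N else 2%N).
have vc i : v3 R (code (s i)) = s i.
  rewrite /v3 /code; case: (hs i) => [->|[->|->]].
  - by rewrite eqxx inordK //= sub0r.
  - rewrite (_ : (0 : R) == -1 = false) ?eqxx ?inordK //=; last first.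
      by apply/negbTE; rewrite eq_sym oppr_eq0 oner_eq0.
    by rewrite subrr.
  - rewrite (_ : (1 : R) == -1 = false) ?oner_eq0 ?inordK //=; last first.
      by apply/negbTE; rewrite -subr_eq0 opprK (_ : 1 + 1 = 2%:R) // pnatr_eq0.
    by rewrite (_ : 2%:R = 1 + 1 :> R) // addrK.
pose σ0 : {ffun 'I_n -> 'I_3} := [ffun i => code (s i)].
rewrite (bigD1 σ0) //= [X in _ = _ + X]big1 ?addr0; last first.
  move=> σ nσ.
  have [/forallP allc | ] := boolP [forall i, s i == v3 R (σ i)].
    exfalso; move/eqP: nσ; apply; apply/ffunP => i; rewrite ffunE.
    by apply: (@v3_inj R); rewrite vc; apply/esym/eqP.
  rewrite negb_forall => /existsP [i Hi].
  by rewrite (bigD1 i) //= (negbTE Hi) mul0r mul0r.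
rewrite big1 ?mul1r; last by move=> i _; rewrite ffunE vc eqxx.
by congr F; apply/matrixP => i j; rewrite !mxE ffunE vc.
Qed.

Theorem theorem4p1 (R : realType) (n : nat) (f : 'rV[R]_n -> R) (L alpha eta : R)
  (d : measure_display) (T : measurableType d) (P : probability T R)
  (xt G : T -> 'rV[R]_n) (D : T -> 'I_n -> bool) :
  (forall x, differentiable f x) ->
  lipschitz_grad f L ->
  0 < alpha -> 0 < eta ->
  rvec_measurable xt -> rvec_measurable G ->
  (forall i, measurable_fun setT (fun w => D w i)) ->
  (forall w, in_lattice alpha (xt w)) ->
  (forall x, (0 < P ([set w | xt w = x] `&` Eevent eta G))%E ->
     forall i, condE P ([set w | xt w = x] `&` Eevent eta G) (fun w => G w 0 i)
               = grad f x 0 i) ->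
  (forall i, forall A, sigma2 xt G A ->
     P (A `&` [set w | D w i]) =
     (\int[P]_(w in A) (Num.min (`|G w 0 i| / eta) 1)%:E)%E) ->
  forall x, (0 < P ([set w | xt w = x] `&` Eevent eta G))%E ->
    condE P ([set w | xt w = x] `&` Eevent eta G)
          (fun w => f (smgd_step alpha (xt w) (G w) (D w)))
    <= f x + L * alpha ^+ 2 / (2 * eta) *
             condE P ([set w | xt w = x] `&` Eevent eta G) (fun w => norm1 (G w))
           - alpha / eta * norm2sq (grad f x).
Proof.
move=> df lip ha he mxt mG mD _ unb hD x hA.
have unbx := unb x hA.
rewrite /condE in unbx *.
set A := [set w | xt w = x] `&` Eevent eta G in hA unbx *.
have sigI S1 S2 : sigma2 xt G S1 -> sigma2 xt G S2 -> sigma2 xt G (S1 `&` S2).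
  move=> h1 h2; exact: (@measurableI _ (g_sigma_algebraType (gen2 xt G)) _ _ h1 h2).
have sigG i B : measurable B -> sigma2 xt G ((fun w => G w 0 i) @^-1` B).
  move=> mB; apply: sub_sigma_algebra; exists i, B; split => //; by right.
have sigX i B : measurable B -> sigma2 xt G ((fun w => xt w 0 i) @^-1` B).
  move=> mB; apply: sub_sigma_algebra; exists i, B; split => //; by left.
have sigM S : sigma2 xt G S -> measurable S.
  apply: smallest_sub; first exact: sigma_algebra_measurable.
  move=> _ [i [B [mB [->|->]]]].
  - by rewrite -[X in measurable X]setTI; apply: mxt.
  - by rewrite -[X in measurable X]setTI; apply: mG.
have Aeq : A = \bigcap_(i in [set: 'I_n]) ((fun w => xt w 0 i) @^-1` [set x 0 i] `&`
                 (fun w => G w 0 i) @^-1` `[- eta, eta]).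
  apply/seteqP; split => w.
  - case=> /= xw Ew i _; split => /=; first by rewrite xw.
    by rewrite in_itv /= -ler_norml; apply: Ew.
  - move=> H; split => /=.
      apply/matrixP => a b; rewrite (ord1 a); by have [] := H b I.
    by move=> i; have [_ /=] := H i I; rewrite in_itv /= -ler_norml.
have sigA : sigma2 xt G A.
  rewrite Aeq; apply: (@fin_bigcap_measurable _ (g_sigma_algebraType (gen2 xt G))).
    exact: finite_finset.
  move=> i _; apply: sigI; [apply: sigX; exact: measurable_set1 | apply: sigG; exact: measurable_itv].
have mA := sigM _ sigA.
have PA1 : (P A < +oo)%E by apply: (le_lt_trans (probability_le1 P mA)); exact: ltey.
set p := fine (P A).
have p0 : 0 < p by apply: fine_gt0; rewrite hA PA1.
pose sp i w : R := (0 < G w 0 i)%R%:R.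
pose sn i w : R := (G w 0 i < 0)%R%:R.
pose sD i w : R := (D w i)%:R.
pose s i w := (sp i w - sn i w) * sD i w.
pose u i w := (sp i w + sn i w) * sD i w.
have msp i : measurable_fun setT (sp i).
  have -> : sp i = \1_[set w | 0 < G w 0 i] by apply/funext => w; rewrite indic_bool.
  apply: measurable_realfun.measurable_indic.
  have -> : [set w | 0 < G w 0 i] = (fun w => G w 0 i) @^-1` `]0, +oo[.
    by apply/seteqP; split => w /=; rewrite in_itv /= andbT.
  by rewrite -[X in measurable X]setTI; apply: mG => //; exact: measurable_itv.
have msn i : measurable_fun setT (sn i).
  have -> : sn i = \1_[set w | G w 0 i < 0] by apply/funext => w; rewrite indic_bool.
  apply: measurable_realfun.measurable_indic.
  have -> : [set w | G w 0 i < 0] = (fun w => G w 0 i) @^-1` `]-oo, 0[.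
    by apply/seteqP; split => w /=; rewrite in_itv /=.
  by rewrite -[X in measurable X]setTI; apply: mG => //; exact: measurable_itv.
have mDi i : measurable [set w | D w i].
  have -> : [set w | D w i] = (fun w => D w i) @^-1` [set true].
    by apply/seteqP; split => w /=.
  by rewrite -[X in measurable X]setTI; apply: mD.
have msD i : measurable_fun setT (sD i).
  have -> : sD i = \1_[set w | D w i] by apply/funext => w; rewrite indic_bool.
  exact: measurable_realfun.measurable_indic.
have ms i : measurable_fun setT (s i).
  by apply: measurable_funM => //; apply: measurable_funB.
have mu i : measurable_fun setT (u i).
  by apply: measurable_funM => //; apply: measurable_funD.
have b01 (b : bool) : `|b%:R : R| <= 1 by case: b; rewrite ?normr1 ?normr0.
have GA i w : A w -> `|G w 0 i| <= eta by case=> _ /(_ i).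
have b11 (a b : R) : `|a| <= 1 -> `|b| <= 1 -> `|a * b| <= 1.
  by move=> h1 h2; rewrite normrM; apply: mulr_ile1.
have GeA i w : A w -> `|G w 0 i / eta| <= 1.
  move=> Aw; rewrite normrM normfV (gtr0_norm he) ler_pdivrMr // mul1r.
  exact: GA.
have intA (h : T -> R) (M : R) : measurable_fun setT h -> (forall w, A w -> `|h w| <= M) ->
    P.-integrable A (EFin \o h).
  by move=> mh hM; exact: (@integ_bd R d T P A h M mA (measurable_funTS mh) hM).
have mGe i : measurable_fun setT (fun w => G w 0 i / eta).
  by apply: measurable_funM => //; exact: measurable_cst.
pose mm i w := Num.min (`|G w 0 i| / eta) 1.
have Kp i : Rintegral P A (fun w => sp i w * sD i w) =
            Rintegral P A (fun w => sp i w * (G w 0 i / eta)).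
  have sigAp : sigma2 xt G (A `&` [set w | 0 < G w 0 i]).
    apply: sigI => //.
    have -> : [set w | 0 < G w 0 i] = (fun w => G w 0 i) @^-1` `]0, +oo[.
      by apply/seteqP; split => w /=; rewrite in_itv /= andbT.
    apply: sigG; exact: measurable_itv.
  transitivity (Rintegral P (A `&` [set w | 0 < G w 0 i]) (sD i)).
    rewrite Rintegral_mkcondr; apply: eq_Rintegral => w _; rewrite patchE /sp.
    by have [gp|gn] := boolP (0 < G w 0 i); [rewrite mem_set // mul1r | rewrite memNset ?mul0r //; apply/negP].
  rewrite (@keyK R 0 d T P (fun w => D w i) _ _ (sigM _ sigAp) (mDi i) (hD i _ sigAp)).
  rewrite Rintegral_mkcondr; apply: eq_Rintegral => w; rewrite inE => Aw; rewrite patchE /sp.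
  have [gp|gn] := boolP (0 < G w 0 i); last by rewrite memNset ?mul0r //; apply/negP.
  rewrite mem_set // mul1r min_l // ?(gtr0_norm gp) //.
  by rewrite ler_pdivrMr // mul1r -(gtr0_norm gp); exact: GA.
have Kn i : Rintegral P A (fun w => sn i w * sD i w) =
            Rintegral P A (fun w => sn i w * - (G w 0 i / eta)).
  have sigAp : sigma2 xt G (A `&` [set w | G w 0 i < 0]).
    apply: sigI => //.
    have -> : [set w | G w 0 i < 0] = (fun w => G w 0 i) @^-1` `]-oo, 0[.
      by apply/seteqP; split => w /=; rewrite in_itv /=.
    apply: sigG; exact: measurable_itv.
  transitivity (Rintegral P (A `&` [set w | G w 0 i < 0]) (sD i)).
    rewrite Rintegral_mkcondr; apply: eq_Rintegral => w _; rewrite patchE /sn.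
    by have [gp|gn] := boolP (G w 0 i < 0); [rewrite mem_set // mul1r | rewrite memNset ?mul0r //; apply/negP].
  rewrite (@keyK R 0 d T P (fun w => D w i) _ _ (sigM _ sigAp) (mDi i) (hD i _ sigAp)).
  rewrite Rintegral_mkcondr; apply: eq_Rintegral => w; rewrite inE => Aw; rewrite patchE /sn.
  have [gp|gn] := boolP (G w 0 i < 0); last by rewrite memNset ?mul0r //; apply/negP.
  rewrite mem_set // mul1r min_l // ?(ltr0_norm gp) ?mulNr //.
  by rewrite -mulNr ler_pdivrMr // mul1r -(ltr0_norm gp); exact: GA.
have intsD i : P.-integrable A (EFin \o (fun w => sp i w * sD i w)).
  apply: (intA _ 1) => [|w _]; first exact: measurable_funM.
  by apply: b11; exact: b01.
have intnD i : P.-integrable A (EFin \o (fun w => sn i w * sD i w)).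
  apply: (intA _ 1) => [|w _]; first exact: measurable_funM.
  by apply: b11; exact: b01.
have intpG i : P.-integrable A (EFin \o (fun w => sp i w * (G w 0 i / eta))).
  apply: (intA _ 1) => [|w Aw]; first exact: measurable_funM.
  by apply: b11; [exact: b01 | exact: GeA].
have intnG i : P.-integrable A (EFin \o (fun w => sn i w * - (G w 0 i / eta))).
  apply: (intA _ 1) => [|w Aw]; first by apply: measurable_funM => //; apply: measurable_funN.
  by apply: b11; [exact: b01 | rewrite normrN; exact: GeA].
have intG i : P.-integrable A (EFin \o (fun w => G w 0 i)).
  by apply: (intA _ eta) => [|w Aw]; [exact: mG | exact: GA].
have intaG i : P.-integrable A (EFin \o (fun w => `|G w 0 i|)).
  apply: (intA _ eta) => [|w Aw]; last by rewrite normr_id; exact: GA.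
  by apply: measurableT_comp => //; exact: normr_measurable.
have Is i : Rintegral P A (s i) = grad f x 0 i * p / eta.
  transitivity (Rintegral P A (fun w => sp i w * sD i w - sn i w * sD i w)).
    by apply: eq_Rintegral => w _; rewrite /s mulrBl.
  rewrite RintegralB // Kp Kn -RintegralB //.
  transitivity (Rintegral P A (fun w => G w 0 i * eta^-1)).
    apply: eq_Rintegral => w _; rewrite /sp /sn.
    by case: (ltrgtP (G w 0 i) 0) => [gn|gp|->]; rewrite /= ?mul1r ?mul0r ?opprK ?subr0 ?sub0r ?add0r ?oppr0 ?mul0r ?subr0.
  by rewrite RintegralZr // -(unbx i) /p mulfVK // gt_eqF.
have Iu i : Rintegral P A (u i) = Rintegral P A (fun w => `|G w 0 i|) / eta.
  transitivity (Rintegral P A (fun w => sp i w * sD i w + sn i w * sD i w)).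
    by apply: eq_Rintegral => w _; rewrite /u mulrDl.
  rewrite RintegralD // Kp Kn -RintegralD //.
  transitivity (Rintegral P A (fun w => `|G w 0 i| * eta^-1)).
    apply: eq_Rintegral => w _; rewrite /sp /sn.
    case: (ltrgtP (G w 0 i) 0) => [gn|gp|->]; rewrite /= ?mul1r ?mul0r ?addr0 ?add0r.
    - by rewrite (ltr0_norm gn) mulNr.
    - by rewrite (gtr0_norm gp).
    - by rewrite normr0 mul0r.
  by rewrite RintegralZr.
pose g i := grad f x 0 i.
have s3 i w : s i w = -1 \/ s i w = 0 \/ s i w = 1.
  rewrite /s /sp /sn /sD.
  case: (ltrgtP (G w 0 i) 0) => _ /=; case: (D w i) => /=;
    rewrite ?subr0 ?sub0r ?mulr1 ?mulr0 ?mul1r ?subrr; by [left | right; left | right; right].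
have su i w : s i w ^+ 2 = u i w.
  rewrite /s /u /sp /sn /sD.
  by case: (ltrgtP (G w 0 i) 0) => _ /=; case: (D w i) => /=; rewrite ?subr0 ?sub0r ?addr0 ?add0r ?mulr1 ?mulr0 ?mul1r ?expr2 ?mulrNN ?mulr1 ?mul0r.
pose F1 w := f (x + \row_i (- alpha * s i w)).
pose F2 w := \sum_(σ : {ffun 'I_n -> 'I_3})
     (\prod_i (s i w == v3 R (σ i))%:R) * f (x + (- alpha) *: \row_i v3 R (σ i)).
have F12 : F1 = F2.
  apply/funext => w; rewrite /F1 /F2.
  rewrite -(fin_decomp _ _ (fun v => f (x + (- alpha) *: v)) (fun i => s i w) (s3^~ w)).
  by congr f; congr (_ + _); apply/matrixP => a b; rewrite !mxE.
have intF2 : P.-integrable A (EFin \o F2).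
  apply: intsum => // σ.
  under eq_fun do rewrite mulrC.
  apply: intZ => //.
  apply: (intA _ 1).
    apply: measurable_prod => i _.
    have -> : (fun w => (s i w == v3 R (σ i))%:R : R) = \1_[set w | s i w == v3 R (σ i)].
      by apply/funext => w; rewrite indic_bool.
    apply: measurable_realfun.measurable_indic.
    have -> : [set w | s i w == v3 R (σ i)] = s i @^-1` [set v3 R (σ i)].
      by apply/seteqP; split => w /= /eqP.
    by rewrite -[X in measurable X]setTI; apply: ms => //; exact: measurable_set1.
  move=> w _; rewrite normr_prod; apply: prodr_ile1 => i _.
  by rewrite normr_ge0 b01.
have IF : Rintegral P A (fun w => f (smgd_step alpha (xt w) (G w) (D w))) = Rintegral P A F2.
  rewrite -F12; apply: eq_Rintegral => w; rewrite inE => -[/= xw _].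
  rewrite /F1; congr f; apply/matrixP => a b; rewrite !mxE xw (ord1 a) sgE /s /sp /sn /sD.
  ring.
pose H w := f x + \sum_i (g i * - alpha) * s i w + L / 2 * \sum_i alpha ^+ 2 * u i w.
have s1 i w : `|s i w| <= 1.
  by case: (s3 i w) => [->|[->|->]]; rewrite ?normrN ?normr1 ?normr0.
have ints i : P.-integrable A (EFin \o s i) by apply: (intA _ 1).
have intu i : P.-integrable A (EFin \o u i).
  apply: (intA _ 1) => // w _; rewrite -su normrX.
  by rewrite expr2; apply: mulr_ile1 => //; exact: s1.
have intc : P.-integrable A (EFin \o (fun _ : T => f x)).
  by apply: (intA _ `|f x|) => //; exact: measurable_cst.
have intS1 : P.-integrable A (EFin \o (fun w => \sum_i (g i * - alpha) * s i w)).
  by apply: intsum => // i; apply: intZ.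
have intS2 : P.-integrable A (EFin \o (fun w => \sum_i alpha ^+ 2 * u i w)).
  by apply: intsum => // i; apply: intZ.
have intH : P.-integrable A (EFin \o H).
  apply: intD => //; first exact: intD.
  exact: intZ.
have FH : Rintegral P A F2 <= Rintegral P A H.
  apply: le_Rintegral => // w Aw.
  change (F2 w <= H w); rewrite -F12 /H.
  have := descent _ _ f L df lip x (\row_i (- alpha * s i w)).
  have -> : \sum_i grad f x 0 i * (\row_i (- alpha * s i w)) 0 i = \sum_i (g i * - alpha) * s i w.
    by apply: eq_bigr => i _; rewrite mxE mulrA.
  have -> : norm2sq (\row_i (- alpha * s i w)) = \sum_i alpha ^+ 2 * u i w.
    by apply: eq_bigr => i _; rewrite mxE exprMn sqrrN su.
  done.
have IH : Rintegral P A H = f x * p + \sum_i (g i * - alpha) * Rintegral P A (s i)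
             + L / 2 * \sum_i alpha ^+ 2 * Rintegral P A (u i).
  rewrite /H RintegralD //; try exact: intZ; try exact: intD.
  rewrite RintegralD // Rintegral_cst // RintegralZl //.
  rewrite (Rintegral_sum _ _ _ _ _ _ _ (fun i w => (g i * - alpha) * s i w)) //; last first.
    by move=> i; apply: intZ.
  rewrite (Rintegral_sum _ _ _ _ _ _ _ (fun i w => alpha ^+ 2 * u i w)) //; last first.
    by move=> i; apply: intZ.
  congr (_ + _ + _ * _); apply: eq_bigr => i _; exact: RintegralZl.
have IN : Rintegral P A (fun w => norm1 (G w)) = \sum_i Rintegral P A (fun w => `|G w 0 i|).
  exact: (Rintegral_sum _ _ _ _ _ _ _ (fun i w => `|G w 0 i|)).
rewrite IF IN /norm2sq -/g.
set SN := \sum_i _.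
rewrite ler_pdivrMr //; apply: (le_trans FH); rewrite IH.
under eq_bigr do rewrite Is.
under [X in L / 2 * X]eq_bigr do rewrite Iu.
set Sg := \sum_i grad f x 0 i ^+ 2.
have E1 : \sum_i g i * - alpha * (grad f x 0 i * p / eta) = (- alpha * p / eta) * Sg.
  by rewrite /Sg mulr_sumr; apply: eq_bigr => i _; rewrite /g; ring.
have E2 : L / 2 * \sum_i alpha ^+ 2 * (Rintegral P A (fun w => `|G w 0 i|) / eta) = L * alpha ^+ 2 / (2 * eta) * SN.
  rewrite /SN mulr_sumr [RHS]mulr_sumr; apply: eq_bigr => i _; field.
  by rewrite gt_eqF.
rewrite E1 E2.
have pn : p != 0 by rewrite gt_eqF.
have en : eta != 0 by rewrite gt_eqF.
rewrite [leRHS](_ : _ = f x * p + (- alpha * p / eta) * Sg + (L * alpha ^+ 2 / (2 * eta)) * SN) //.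
by field; rewrite en pn.
Qed.
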